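(* Let $\mathfrak p$ be a probability distribution supported by $\mathbb N$ and let $B\subseteq\mathbb N^{\mathbb N}$ be the set of bounded sequences. Then $\dim_H\pi_{\mathfrak p}(B)=1$.
   Context: $\mathbb N=\{1,2,3,\dots\}$. A probability distribution $\mathfrak p=(p_i)_{i\in\mathbb N}$ is supported by $\mathbb N$ if $p_i\in(0,1)$ for all $i$ and $\sum_{i=1}^\infty p_i=1$. Set $\widehat{p_1}=0$ and $\widehat{p_n}=\sum_{i=1}^{n-1}p_i$ for $n\ge 2$. For $n\in\mathbb N$ let $T_n x=p_n x+\widehat{p_n}$. Define $\pi_{\mathfrak p}:\mathbb N^{\mathbb N}\to[0,1)$ by $\pi_{\mathfrak p}((n_j))=\lim_{j\to\infty}T_{n_1}\circ\cdots\circ T_{n_j}(0)=\widehat{p_{n_1}}+\sum_{j=1}^\infty p_{n_1}\cdots p_{n_j}\widehat{p_{n_{j+1}}}$. $\dim_H$ denotes Hausdorff dimension. *)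

(* Defs.v *)
From Stdlib Require Import Reals.
Open Scope R_scope.

(* A probability distribution p supported by N = {1,2,...}; p 0 is unused. *)
Definition supported_by_N (p : nat -> R) : Prop :=
  (forall i, (1 <= i)%nat -> 0 < p i < 1) /\
  infinite_sum (fun k => p (S k)) 1.

Fixpoint phat (p : nat -> R) (n : nat) : R :=
  match n with
  | O => 0
  | S O => 0
  | S m => phat p m + p m
  end.

Definition T (p : nat -> R) (n : nat) (x : R) : R := p n * x + phat p n.

(* Tcomp p w j x = T_{w 0} (T_{w 1} ( ... T_{w (j-1)} x)).
   The sequence (n_1, n_2, ...) is w 0, w 1, ... *)
Fixpoint Tcomp_from (p : nat -> R) (w : nat -> nat) (k j : nat) (x : R) : R :=
  match j with
  | O => x
  | S j' => T p (w k) (Tcomp_from p w (S k) j' x)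
  end.

Definition Tcomp (p : nat -> R) (w : nat -> nat) (j : nat) (x : R) : R :=
  Tcomp_from p w O j x.

Definition in_NN (w : nat -> nat) : Prop := forall j, (1 <= w j)%nat.

Definition pi_is (p : nat -> R) (w : nat -> nat) (y : R) : Prop :=
  Un_cv (fun j => Tcomp p w j 0) y.

Definition bounded_seq (w : nat -> nat) : Prop :=
  in_NN w /\ exists M : nat, forall j, (w j <= M)%nat.

Definition pi_image_bounded (p : nat -> R) (y : R) : Prop :=
  exists w, bounded_seq w /\ pi_is p w y.

Definition hausdorff_null (s : R) (E : R -> Prop) : Prop :=
  forall delta eps : R, 0 < delta -> 0 < eps ->
  exists (U : nat -> R -> Prop) (d : nat -> R) (l : R),
    (forall x, E x -> exists i, U i x) /\
    (forall i, 0 < d i <= delta) /\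
    (forall i x y, U i x -> U i y -> Rabs (x - y) <= d i) /\
    infinite_sum (fun i => Rpower (d i) s) l /\ l < eps.

Definition is_glb (A : R -> Prop) (m : R) : Prop :=
  (forall x, A x -> m <= x) /\ (forall b, (forall x, A x -> b <= x) -> b <= m).

Definition hausdorff_dim_is (E : R -> Prop) (dim : R) : Prop :=
  is_glb (fun s => 0 <= s /\ hausdorff_null s E) dim.

(* Main.v *)
Require Import Defs.
From Stdlib Require Import Reals Lra Lia Classical ClassicalEpsilon FunctionalExtensionality List.
Open Scope R_scope.

Lemma phat_S (r : nat -> R) m : (1 <= m)%nat -> phat r (S m) = phat r m + r m.
Proof. intros H. destruct m as [|m]; [lia|]. reflexivity. Qed.

Lemma phat_1 r : phat r 1 = 0. Proof. reflexivity. Qed.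

Definition sh1 (x : nat -> nat) : nat -> nat := fun l => x (S l).
Definition shk (k : nat) (x : nat -> nat) : nat -> nat := fun l => x (k + l)%nat.

Lemma Tcomp_shift_gen r x k m j t :
  Tcomp_from r x (k + m) j t = Tcomp_from r (shk k x) m j t.
Proof.
  revert m. induction j as [|j IH]; intros m; simpl; [reflexivity|].
  rewrite <- IH. replace (S (k + m)) with (k + S m)%nat by lia. reflexivity.
Qed.

Lemma Tcomp_S r x j t : Tcomp r x (S j) t = T r (x O) (Tcomp r (sh1 x) j t).
Proof.
  unfold Tcomp. simpl. f_equal.
  rewrite (Tcomp_shift_gen r x 1 0). reflexivity.
Qed.

Lemma Tcomp_0 r x t : Tcomp r x 0 t = t. Proof. reflexivity. Qed.

Fixpoint Pi (r : nat -> R) (x : nat -> nat) (j : nat) : R :=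
  match j with O => 1 | S j' => r (x O) * Pi r (sh1 x) j' end.

Lemma Tcomp_affine r x j t : Tcomp r x j t = Tcomp r x j 0 + Pi r x j * t.
Proof.
  revert x. induction j as [|j IH]; intros x.
  - rewrite !Tcomp_0. simpl. ring.
  - rewrite !Tcomp_S. rewrite IH. unfold T. simpl. ring.
Qed.

Lemma Tcomp_add r x j m t : Tcomp r x (j + m) t = Tcomp r x j (Tcomp r (shk j x) m t).
Proof.
  revert x. induction j as [|j IH]; intros x.
  - simpl. rewrite Tcomp_0. f_equal.
  - simpl plus. rewrite !Tcomp_S. rewrite IH. reflexivity.
Qed.

Lemma Tcomp_rem r (y : nat -> nat) (rm : nat -> R) :
  (forall k, T r (y k) (rm (S k)) = rm k) -> forall j, Tcomp r y j (rm j) = rm O.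
Proof.
  intros H j. revert y rm H. induction j as [|j IH]; intros y rm H.
  - reflexivity.
  - rewrite Tcomp_S. rewrite (IH (sh1 y) (fun k => rm (S k))).
    + apply H.
    + intros k. apply H.
Qed.

Lemma cv_shift1 u l : Un_cv u l -> Un_cv (fun n => u (S n)) l.
Proof.
  intros H eps He. destruct (H eps He) as [N HN]. exists N. intros n Hn. apply HN. lia.
Qed.

Lemma cv_const c : Un_cv (fun _ => c) c.
Proof. intros eps He. exists O. intros n _. unfold Rdist. rewrite Rminus_diag, Rabs_R0. lra. Qed.

Definition piv (r : nat -> R) (x : nat -> nat) : R :=
  epsilon (inhabits 0) (fun l => Un_cv (fun j => Tcomp r x j 0) l).

Section Code.
Variable r : nat -> R.
Variable M : nat.
Hypothesis hr : forall i, (1 <= i <= M)%nat -> 0 < r i < 1.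
Hypothesis hP : phat r (S M) <= 1.

Definition code (x : nat -> nat) := forall j, (1 <= x j <= M)%nat.

Lemma code_sh1 x : code x -> code (sh1 x).
Proof. intros H j. apply H. Qed.
Lemma code_shk k x : code x -> code (shk k x).
Proof. intros H j. apply H. Qed.

Lemma phat_mono i j : (1 <= i <= j)%nat -> (j <= S M)%nat -> 0 <= phat r i <= phat r j.
Proof.
  intros Hij HjM. induction j as [|j IH]; [lia|].
  destruct (Nat.eq_dec i (S j)) as [->|Hne].
  - split; [|lra]. clear IH. induction j as [|j IH2].
    + simpl. lra.
    + rewrite phat_S by lia. pose proof (hr (S j)). assert (0 < r (S j)) by (apply hr; lia).
      assert (0 <= phat r (S j)) by (apply IH2; lia). lra.
  - assert (Hi : (1 <= i <= j)%nat) by lia. destruct (IH Hi) as [H1 H2]; [lia|].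
    rewrite phat_S by lia. assert (0 < r j) by (apply hr; lia). lra.
Qed.

Lemma phat_le_P i : (1 <= i <= S M)%nat -> 0 <= phat r i <= phat r (S M).
Proof. intros H. apply phat_mono; lia. Qed.

Lemma T_bounds i t : (1 <= i <= M)%nat -> 0 <= t <= 1 ->
  phat r i <= T r i t <= phat r (S i).
Proof.
  intros Hi Ht. unfold T. rewrite phat_S by lia. pose proof (hr i Hi).
  split; nra.
Qed.

Lemma Tcomp_bounds x j t : code x -> 0 <= t <= phat r (S M) ->
  0 <= Tcomp r x j t <= phat r (S M).
Proof.
  revert x. induction j as [|j IH]; intros x Hx Ht.
  - rewrite Tcomp_0. lra.
  - rewrite Tcomp_S. pose proof (IH (sh1 x) (code_sh1 x Hx) Ht) as H.
    assert (Hi := Hx O).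
    pose proof (T_bounds (x O) (Tcomp r (sh1 x) j t) Hi ltac:(lra)).
    pose proof (phat_le_P (x O) ltac:(lia)). pose proof (phat_le_P (S (x O)) ltac:(lia)).
    lra.
Qed.

Lemma Pi_pos x j : code x -> 0 < Pi r x j.
Proof.
  revert x. induction j as [|j IH]; intros x Hx; simpl; [lra|].
  apply Rmult_lt_0_compat; [apply hr, Hx|apply IH, code_sh1, Hx].
Qed.

Lemma Pi_le x j rho : code x -> (forall i, (1 <= i <= M)%nat -> r i <= rho) -> Pi r x j <= rho ^ j.
Proof.
  intros Hx Hrho. revert x Hx. induction j as [|j IH]; intros x Hx; simpl; [lra|].
  apply Rmult_le_compat.
  - left; apply hr, Hx.
  - left; apply Pi_pos, code_sh1, Hx.
  - apply Hrho, Hx.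
  - apply IH, code_sh1, Hx.
Qed.

Lemma Tcomp_growing x : code x -> Un_growing (fun j => Tcomp r x j 0).
Proof.
  intros Hx j. simpl. replace (S j) with (j + 1)%nat by lia.
  rewrite Tcomp_add. rewrite (Tcomp_affine r x j (Tcomp r (shk j x) 1 0)).
  pose proof (Pi_pos x j Hx).
  pose proof (phat_le_P (S M) ltac:(lia)).
  pose proof (Tcomp_bounds (shk j x) 1 0 (code_shk j x Hx) ltac:(lra)). nra.
Qed.

Lemma piv_cv x : code x -> Un_cv (fun j => Tcomp r x j 0) (piv r x).
Proof.
  intros Hx. unfold piv. apply epsilon_spec.
  destruct (growing_cv (fun j => Tcomp r x j 0)) as [l Hl].
  - apply Tcomp_growing, Hx.
  - exists (phat r (S M)). intros y [i ->].
    pose proof (phat_le_P (S M) ltac:(lia)).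
    apply (Tcomp_bounds x i 0 Hx). lra.
  - exists l; exact Hl.
Qed.

Lemma piv_bounds x : code x -> 0 <= piv r x <= phat r (S M).
Proof.
  intros Hx. pose proof (piv_cv x Hx) as H.
  pose proof (phat_le_P (S M) ltac:(lia)).
  split.
  - eapply Rle_cv_lim; [|apply cv_const|exact H].
    intros n. apply (Tcomp_bounds x n 0 Hx). lra.
  - eapply Rle_cv_lim; [|exact H|apply cv_const].
    intros n. apply (Tcomp_bounds x n 0 Hx). lra.
Qed.

Lemma piv_dec x : code x -> piv r x = T r (x O) (piv r (sh1 x)).
Proof.
  intros Hx. apply (UL_sequence (fun n => Tcomp r x (S n) 0)).
  - apply (cv_shift1 (fun j => Tcomp r x j 0)), piv_cv, Hx.
  - assert (E : (fun n => Tcomp r x (S n) 0) =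
       (fun n => (fun _ => r (x O)) n * (fun n => Tcomp r (sh1 x) n 0) n + (fun _ => phat r (x O)) n)).
    { apply functional_extensionality. intros n. rewrite Tcomp_S. reflexivity. }
    rewrite E. unfold T. apply CV_plus; [apply CV_mult|]; try apply cv_const.
    apply piv_cv, code_sh1, Hx.
Qed.

End Code.

Lemma Rpower_pos x y : 0 < Rpower x y.
Proof. unfold Rpower. apply exp_pos. Qed.

Lemma first_diff (x y : nat -> nat) n : x n <> y n ->
  exists m, (forall l, (l < m)%nat -> x l = y l) /\ x m <> y m.
Proof.
  induction n as [n IH] using (well_founded_induction Wf_nat.lt_wf). intros Hn.
  destruct (classic (forall l, (l < n)%nat -> x l = y l)) as [H|H].
  - exists n. auto.
  - apply not_all_ex_not in H. destruct H as [l Hl].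
    apply imply_to_and in Hl. destruct Hl as [Hl1 Hl2]. exact (IH l Hl1 Hl2).
Qed.

Section Holder.
Variables p q : nat -> R.
Variable M : nat.
Hypothesis hp : forall i, (1 <= i <= M)%nat -> 0 < p i < 1.
Hypothesis hq : forall i, (1 <= i <= M)%nat -> 0 < q i < 1.
Hypothesis hPp : phat p (S M) < 1.
Hypothesis hPq : phat q (S M) <= 1.
Variable s : R.
Hypothesis hs : 0 <= s.
Hypothesis hqp : forall i, (1 <= i <= M)%nat -> q i <= Rpower (p i) s.
Variable pmin : R.
Hypothesis hpmin : 0 < pmin.
Hypothesis hpmin2 : forall i, (1 <= i <= M)%nat -> pmin <= p i.

Definition gap := pmin * (1 - phat p (S M)).
Definition Kc := Rpower gap (- s).

Lemma gap_pos : 0 < gap.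
Proof. unfold gap. apply Rmult_lt_0_compat; lra. Qed.

Lemma base_lt x y : code M x -> code M y -> (x O < y O)%nat ->
  gap <= piv p y - piv p x /\ Rabs (piv q x - piv q y) <= 1.
Proof.
  intros Hx Hy Hlt. split.
  - rewrite (piv_dec p M hp ltac:(lra) x Hx), (piv_dec p M hp ltac:(lra) y Hy).
    pose proof (piv_bounds p M hp ltac:(lra) (sh1 x) (code_sh1 M x Hx)) as Bx.
    pose proof (piv_bounds p M hp ltac:(lra) (sh1 y) (code_sh1 M y Hy)) as By.
    pose proof (T_bounds p M hp (y O) (piv p (sh1 y)) (Hy O) ltac:(lra)) as Ty.
    pose proof (phat_mono p M hp (S (x O)) (y O) ltac:(specialize (Hx O); lia) ltac:(specialize (Hy O); lia)).
    rewrite phat_S in H by (specialize (Hx O); lia).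
    pose proof (hpmin2 (x O) (Hx O)). pose proof (hp (x O) (Hx O)).
    unfold T at 2. unfold gap. nra.
  - pose proof (piv_bounds q M hq hPq x Hx). pose proof (piv_bounds q M hq hPq y Hy).
    apply Rabs_le. lra.
Qed.

Lemma Kc_gap : Kc * Rpower gap s = 1.
Proof.
  unfold Kc. rewrite <- Rpower_plus. replace (-s + s) with 0 by ring.
  apply Rpower_O, gap_pos.
Qed.

Lemma holder_n n : forall x y, code M x -> code M y ->
  (forall l, (l < n)%nat -> x l = y l) -> x n <> y n ->
  0 < Rabs (piv p x - piv p y) /\
  Rabs (piv q x - piv q y) <= Kc * Rpower (Rabs (piv p x - piv p y)) s.
Proof.
  pose proof gap_pos as Hg.
  assert (HK : 0 < Kc) by apply Rpower_pos.
  induction n as [|n IH]; intros x y Hx Hy Hl Hn.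
  - assert (Hb : forall x y, code M x -> code M y -> (x O < y O)%nat ->
      0 < Rabs (piv p x - piv p y) /\
      Rabs (piv q x - piv q y) <= Kc * Rpower (Rabs (piv p x - piv p y)) s).
    { clear x y Hx Hy Hl Hn. intros x y Hx Hy Hlt.
      destruct (base_lt x y Hx Hy Hlt) as [H1 H2].
      rewrite (Rabs_minus_sym (piv p x)). rewrite (Rabs_right (piv p y - piv p x)) by lra.
      split; [lra|].
      apply (Rle_trans _ 1); [exact H2|].
      rewrite <- Kc_gap. apply Rmult_le_compat_l; [lra|].
      apply Rle_Rpower_l; lra. }
    destruct (Nat.lt_gt_cases (x O) (y O)) as [[H|H] _]; [exact Hn|..].
    + apply Hb; auto.
    + rewrite (Rabs_minus_sym (piv p x)), (Rabs_minus_sym (piv q x)). apply Hb; auto.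
  - assert (H0 : x O = y O) by (apply Hl; lia).
    destruct (IH (sh1 x) (sh1 y) (code_sh1 M x Hx) (code_sh1 M y Hy)) as [IH1 IH2].
    + intros l Hl'. apply Hl. lia.
    + exact Hn.
    + rewrite (piv_dec p M hp ltac:(lra) x Hx), (piv_dec p M hp ltac:(lra) y Hy).
      rewrite (piv_dec q M hq hPq x Hx), (piv_dec q M hq hPq y Hy).
      rewrite <- H0. unfold T.
      set (a := x O) in *.
      replace (p a * piv p (sh1 x) + phat p a - (p a * piv p (sh1 y) + phat p a))
        with (p a * (piv p (sh1 x) - piv p (sh1 y))) by ring.
      replace (q a * piv q (sh1 x) + phat q a - (q a * piv q (sh1 y) + phat q a))
        with (q a * (piv q (sh1 x) - piv q (sh1 y))) by ring.
      rewrite !Rabs_mult.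
      pose proof (hp a (Hx O)) as Hpa. pose proof (hq a (Hx O)) as Hqa.
      rewrite (Rabs_right (p a)) by lra. rewrite (Rabs_right (q a)) by lra.
      split; [apply Rmult_lt_0_compat; lra|].
      rewrite <- Rpower_mult_distr by lra.
      pose proof (hqp a (Hx O)).
      pose proof (Rpower_pos (Rabs (piv p (sh1 x) - piv p (sh1 y))) s).
      apply (Rle_trans _ (q a * (Kc * Rpower (Rabs (piv p (sh1 x) - piv p (sh1 y))) s))).
      * apply Rmult_le_compat_l; lra.
      * replace (Kc * (Rpower (p a) s * Rpower (Rabs (piv p (sh1 x) - piv p (sh1 y))) s))
          with (Rpower (p a) s * (Kc * Rpower (Rabs (piv p (sh1 x) - piv p (sh1 y))) s)) by ring.
        apply Rmult_le_compat_r; [|lra]. nra.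
Qed.

Lemma holder x y : code M x -> code M y ->
  (0 < Rabs (piv p x - piv p y) /\ Rabs (piv q x - piv q y) <= Kc * Rpower (Rabs (piv p x - piv p y)) s) \/ x = y.
Proof.
  intros Hx Hy. destruct (classic (exists n, x n <> y n)) as [[n Hn]|H].
  - left. destruct (first_diff x y n Hn) as [m [Hm1 Hm2]].
    apply (holder_n m x y Hx Hy Hm1 Hm2).
  - right. apply functional_extensionality. intros n.
    destruct (Nat.eq_dec (x n) (y n)); auto. exfalso; apply H; eauto.
Qed.

End Holder.

Section Surj.
Variable q : nat -> R.
Variable M : nat.
Hypothesis hq : forall i, (1 <= i <= M)%nat -> 0 < q i < 1.
Hypothesis hPq : phat q (S M) = 1.
Variable rho : R.
Hypothesis hrho : rho < 1.
Hypothesis hrho2 : forall i, (1 <= i <= M)%nat -> q i <= rho.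

Lemma dig_ex_gen n t : (n <= M)%nat -> 0 <= t < phat q (S n) ->
  exists i, (1 <= i <= M)%nat /\ phat q i <= t < phat q (S i).
Proof.
  induction n as [|n IH]; intros Hn Ht.
  - simpl in Ht. lra.
  - destruct n as [|n'].
    + exists 1%nat. split; [lia|]. simpl phat at 1. exact Ht.
    + destruct (Rlt_le_dec t (phat q (S (S n')))) as [H|H].
      * apply IH; [lia|lra].
      * exists (S (S n')). split; [lia|]. lra.
Qed.

Definition dig (t : R) : nat :=
  epsilon (inhabits O) (fun i => (1 <= i <= M)%nat /\ phat q i <= t < phat q (S i)).

Lemma dig_spec t : 0 <= t < 1 ->
  (1 <= dig t <= M)%nat /\ phat q (dig t) <= t < phat q (S (dig t)).
Proof.
  intros Ht. unfold dig. apply epsilon_spec. apply (dig_ex_gen M); [lia|]. lra.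
Qed.

Fixpoint remf (t : R) (k : nat) : R :=
  match k with
  | O => t
  | S k' => (remf t k' - phat q (dig (remf t k'))) / q (dig (remf t k'))
  end.

Lemma remf_range t k : 0 <= t < 1 -> 0 <= remf t k < 1.
Proof.
  intros Ht. induction k as [|k IH]; simpl; [exact Ht|].
  destruct (dig_spec _ IH) as [H1 [H2 H3]].
  rewrite phat_S in H3 by lia. pose proof (hq _ H1).
  set (u := remf t k) in *. set (d := dig u) in *.
  split.
  - apply Rmult_le_pos; [lra|]. left; apply Rinv_0_lt_compat; lra.
  - apply (Rmult_lt_reg_r (q d)); [lra|]. unfold Rdiv. rewrite Rmult_assoc, Rinv_l by lra. lra.
Qed.

Definition ycode (t : R) : nat -> nat := fun k => dig (remf t k).

Lemma ycode_code t : 0 <= t < 1 -> code M (ycode t).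
Proof. intros Ht k. apply (dig_spec _ (remf_range t k Ht)). Qed.

Lemma ycode_piv t : 0 <= t < 1 -> piv q (ycode t) = t.
Proof.
  intros Ht. assert (Hc := ycode_code t Ht).
  assert (HT : forall k, T q (ycode t k) (remf t (S k)) = remf t k).
  { intros k. unfold ycode, T. simpl.
    destruct (dig_spec _ (remf_range t k Ht)) as [H1 _]. pose proof (hq _ H1).
    field. lra. }
  apply (UL_sequence (fun j => Tcomp q (ycode t) j 0)).
  - apply (piv_cv q M hq ltac:(lra)). exact Hc.
  - intros eps He.
    assert (Hr0 : 0 <= rho). { pose proof (hrho2 (ycode t O) (Hc O)). pose proof (hq _ (Hc O)). lra. }
    destruct (pow_lt_1_zero rho ltac:(rewrite Rabs_right; lra) eps He) as [N HN].
    exists N. intros n Hn.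
    pose proof (Tcomp_rem q (ycode t) (remf t) HT n) as E. simpl in E.
    rewrite Tcomp_affine in E.
    pose proof (Pi_pos q M hq (ycode t) n Hc). pose proof (Pi_le q M hq (ycode t) n rho Hc hrho2).
    pose proof (remf_range t n Ht). specialize (HN n Hn). rewrite Rabs_right in HN by (apply Rle_ge, pow_le; lra).
    unfold Rdist. rewrite Rabs_left1 by nra. nra.
Qed.

End Surj.

Definition lsum (l : list (R*R)) : R := fold_right (fun iv acc => snd iv + acc) 0 l.

Lemma lsum_app l1 l2 : lsum (l1 ++ l2) = lsum l1 + lsum l2.
Proof. induction l1 as [|iv l1 IH]; simpl; [ring|]. rewrite IH. ring. Qed.

Lemma lsum_nonneg l : (forall iv, In iv l -> 0 <= snd iv) -> 0 <= lsum l.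
Proof.
  induction l as [|iv l IH]; intros H; simpl; [lra|].
  pose proof (H iv (or_introl eq_refl)). assert (0 <= lsum l) by (apply IH; intros; apply H; right; auto). lra.
Qed.

Lemma cover_list n : forall (l : list (R*R)), length l = n -> forall a b, a <= b ->
  (forall x, a <= x <= b -> exists iv, In iv l /\ fst iv <= x <= fst iv + snd iv) ->
  (forall iv, In iv l -> 0 <= snd iv) -> b - a <= lsum l.
Proof.
  induction n as [|n IH]; intros l Hlen a b Hab Hcov Hpos.
  - destruct l; [|discriminate]. destruct (Hcov b ltac:(lra)) as [iv [[] _]].
  - destruct (Hcov b ltac:(lra)) as [[al c] [Hin [Hb1 Hb2]]]. simpl in Hb1, Hb2.
    destruct (in_split _ _ Hin) as [l1 [l2 ->]].
    assert (Hsum : lsum (l1 ++ (al, c) :: l2) = c + lsum (l1 ++ l2)).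
    { rewrite !lsum_app. simpl. ring. }
    rewrite Hsum.
    assert (Hpos' : forall iv, In iv (l1 ++ l2) -> 0 <= snd iv).
    { intros iv Hiv. apply Hpos. apply in_app_iff in Hiv. apply in_app_iff. simpl. tauto. }
    destruct (Rle_lt_dec al a) as [Ha|Ha].
    + pose proof (lsum_nonneg _ Hpos'). lra.
    + assert (al - a <= lsum (l1 ++ l2)).
      { apply Rle_plus_epsilon. intros eps He.
        set (b' := Rmax a (al - eps)).
        assert (Hb' : a <= b' /\ b' < al /\ al - eps <= b').
        { unfold b'. split; [apply Rmax_l|]. split; [apply Rmax_lub_lt; lra|apply Rmax_r]. }
        assert (b' - a <= lsum (l1 ++ l2)); [|lra].
        apply (IH (l1 ++ l2)).
        - rewrite length_app in *. simpl in Hlen. lia.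
        - lra.
        - intros x Hx. destruct (Hcov x ltac:(lra)) as [iv [Hiv Hxiv]].
          exists iv. split; [|exact Hxiv].
          apply in_app_iff in Hiv. destruct Hiv as [Hiv|[Hiv|Hiv]]; apply in_app_iff; auto.
          subst iv. simpl in Hxiv. lra.
        - exact Hpos'. }
      lra.
Qed.

Lemma isum_scal f l k : infinite_sum f l -> infinite_sum (fun n => k * f n) (k * l).
Proof.
  intros H.
  assert (E : (fun n => sum_f_R0 (fun i => k * f i) n) = (fun n => (fun _ => k) n * sum_f_R0 f n)).
  { apply functional_extensionality. intros n. rewrite scal_sum.
    apply sum_eq. intros. ring. }
  change (Un_cv (fun n => sum_f_R0 (fun i => k * f i) n) (k * l)).
  rewrite E. apply CV_mult; [|exact H].
  intros eps He. exists O. intros. unfold Rdist. rewrite Rminus_diag, Rabs_R0. lra.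
Qed.

Lemma psum_le f l n : infinite_sum f l -> (forall i, 0 <= f i) -> sum_f_R0 f n <= l.
Proof.
  intros H Hf. apply (growing_ineq (fun n => sum_f_R0 f n)); [|exact H].
  intros m. simpl. pose proof (Hf (S m)). lra.
Qed.

Lemma geom_half eta : infinite_sum (fun i => eta * (/2)^i) (2 * eta).
Proof.
  pose proof (GP_infinite (/2) ltac:(rewrite Rabs_right; lra)) as H.
  unfold Pser in H. apply (isum_scal _ _ eta) in H.
  replace (2 * eta) with (eta * / (1 - /2)) by field.
  eapply (Un_cv_ext (fun n => sum_f_R0 (fun i => eta * (1 * (/2)^i)) n)); [|exact H].
  intros n. apply sum_eq. intros. ring.
Qed.

Lemma list_bound (l : list R) : exists N, forall x, In x l -> x < INR N.
Proof.
  induction l as [|a l [N HN]].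
  - exists O. intros x [].
  - destruct (INR_archimed 1 a ltac:(lra)) as [n Hn].
    exists (Nat.max n N). intros x [<-|Hx].
    + pose proof (le_INR n (Nat.max n N) ltac:(lia)). lra.
    + pose proof (HN x Hx). pose proof (le_INR N (Nat.max n N) ltac:(lia)). lra.
Qed.

Lemma lsum_seq (g : nat -> R * R) m :
  lsum (map g (seq 0 (S m))) = sum_f_R0 (fun i => snd (g i)) m.
Proof.
  induction m as [|m IH].
  - simpl. ring.
  - rewrite seq_S, map_app, lsum_app, IH. simpl. ring.
Qed.

Lemma outer_bound (W : nat -> R -> Prop) (e : nat -> R) (Sg : R) :
  (forall i, 0 <= e i) ->
  (forall i x y, W i x -> W i y -> Rabs (x - y) <= e i) ->
  infinite_sum e Sg ->
  (forall t, 0 <= t <= 1/2 -> exists i, W i t) ->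
  1/2 <= 2 * Sg.
Proof.
  intros He Hd HS Hc.
  apply Rle_plus_epsilon. intros eps Heps.
  set (eta := eps / 4).
  set (w0 := fun i => epsilon (inhabits 0) (W i)).
  set (et := fun i => eta * (/2)^i).
  assert (Het : forall i, 0 < et i) by (intros i; unfold et, eta; apply Rmult_lt_0_compat; [lra|apply pow_lt; lra]).
  set (V := fun i x => (exists w, W i w) /\ Rabs (x - w0 i) < e i + et i).
  assert (HWV : forall i x, W i x -> V i x).
  { intros i x Hx. split; [eauto|].
    assert (W i (w0 i)) by (unfold w0; apply epsilon_spec; eauto).
    pose proof (Hd i x (w0 i) Hx H). pose proof (Het i). lra. }
  assert (Hcf : forall x, (exists y, (fun x y => exists n, x = INR n /\ V n y) x y) ->
                  (fun x => exists n, x = INR n) x).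
  { intros x [y [n [Hn _]]]. eauto. }
  set (F := mkfamily (fun x => exists n, x = INR n) (fun x y => exists n, x = INR n /\ V n y) Hcf).
  destruct (compact_P3 0 (1/2) F) as [D [Hcov [l Hl]]].
  - split.
    + intros t Ht. destruct (Hc t Ht) as [i Hi]. exists (INR i). simpl. exists i. split; auto.
    + intros x y [n [-> [Hne Hy]]]. simpl.
      assert (Hd0 : 0 < e n + et n - Rabs (y - w0 n)) by lra.
      exists (mkposreal _ Hd0). intros z Hz. unfold disc in Hz. simpl in Hz.
      exists n. split; [reflexivity|]. split; [exact Hne|].
      pose proof (Rabs_triang (z - y) (y - w0 n)).
      replace (z - y + (y - w0 n)) with (z - w0 n) in H by ring. lra.
  - destruct (list_bound l) as [N HN].
    destruct N as [|m].
    { destruct (Hcov 0 ltac:(lra)) as [y [[n [-> _]] HD]].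
      assert (In (INR n) l) by (apply Hl; split; [exists n; reflexivity|exact HD]).
      pose proof (HN _ H). pose proof (pos_INR n). simpl in H0. lra. }
    set (g := fun n => (w0 n - e n - et n, 2 * (e n + et n))).
    assert (Hmain : 1/2 - 0 <= lsum (map g (seq 0 (S m)))).
    { apply (cover_list (length (map g (seq 0 (S m))))); [reflexivity|lra| |].
      - intros x Hx. destruct (Hcov x Hx) as [y [[n [-> [Hne Hy]]] HD]].
        assert (In (INR n) l) by (apply Hl; split; [exists n; reflexivity|exact HD]).
        pose proof (HN _ H). apply INR_lt in H0.
        exists (g n). split.
        + apply in_map. apply in_seq. lia.
        + unfold g. simpl. apply Rabs_def2 in Hy. lra.
      - intros iv Hiv. apply in_map_iff in Hiv. destruct Hiv as [n [<- _]].
        unfold g. simpl. pose proof (He n). pose proof (Het n). lra. }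
    rewrite lsum_seq in Hmain. unfold g in Hmain. simpl in Hmain.
    replace (sum_f_R0 (fun i => 2 * (e i + et i)) m) with
      (2 * sum_f_R0 e m + 2 * sum_f_R0 et m) in Hmain.
    2:{ rewrite (scal_sum e m 2), (scal_sum et m 2), <- sum_plus. apply sum_eq. intros. ring. }
    pose proof (psum_le e Sg m HS He).
    pose proof (psum_le et (2 * eta) m (geom_half eta) ltac:(intros i; left; apply Het)).
    unfold eta in *. lra.
Qed.

Lemma exp_le_mono x y : x <= y -> exp x <= exp y.
Proof. intros [H|H]; [left; apply exp_increasing; auto|subst; lra]. Qed.

Lemma Rpower_anti x a b : 0 < x <= 1 -> a <= b -> Rpower x b <= Rpower x a.
Proof.
  intros Hx Hab. unfold Rpower. apply exp_le_mono.
  assert (ln x <= 0).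
  { destruct (Req_dec x 1) as [->|Hne]; [rewrite ln_1; lra|].
    rewrite <- ln_1. left. apply ln_increasing; lra. }
  nra.
Qed.

Lemma Rpower_anti_strict x a b : 0 < x < 1 -> a < b -> Rpower x b < Rpower x a.
Proof.
  intros Hx Hab. unfold Rpower. apply exp_increasing.
  assert (ln x < 0) by (rewrite <- ln_1; apply ln_increasing; lra).
  nra.
Qed.

Lemma phat_mono_pos (f : nat -> R) i j : (forall k, (1 <= k)%nat -> 0 < f k) ->
  (1 <= i <= j)%nat -> 0 <= phat f i <= phat f j.
Proof.
  intros Hf Hij. induction j as [|j IH]; [lia|].
  destruct (Nat.eq_dec i (S j)) as [->|Hne].
  - split; [|lra]. clear IH. induction j as [|j IH2].
    + simpl. lra.
    + rewrite phat_S by lia. assert (0 < f (S j)) by (apply Hf; lia).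
      assert (0 <= phat f (S j)) by (apply IH2; lia). lra.
  - destruct (IH ltac:(lia)) as [H1 H2].
    rewrite phat_S by lia. assert (0 < f j) by (apply Hf; lia). lra.
Qed.

Lemma finite_max (f : nat -> R) n : (forall i, (1 <= i <= n)%nat -> f i < 1) ->
  exists rho, rho < 1 /\ forall i, (1 <= i <= n)%nat -> f i <= rho.
Proof.
  induction n as [|n IH]; intros H.
  - exists 0. split; [lra|]. intros; lia.
  - destruct IH as [rho [H1 H2]]; [intros i Hi; apply H; lia|].
    exists (Rmax rho (f (S n))). split.
    + apply Rmax_lub_lt; [lra|apply H; lia].
    + intros i Hi. destruct (Nat.eq_dec i (S n)) as [->|Hne]; [apply Rmax_r|].
      eapply Rle_trans; [apply H2; lia|apply Rmax_l].
Qed.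

Lemma finite_min (f : nat -> R) n : (forall i, (1 <= i <= n)%nat -> 0 < f i) ->
  exists m, 0 < m /\ forall i, (1 <= i <= n)%nat -> m <= f i.
Proof.
  induction n as [|n IH]; intros H.
  - exists 1. split; [lra|]. intros; lia.
  - destruct IH as [m [H1 H2]]; [intros i Hi; apply H; lia|].
    exists (Rmin m (f (S n))). split.
    + apply Rmin_glb_lt; [lra|apply H; lia].
    + intros i Hi. destruct (Nat.eq_dec i (S n)) as [->|Hne]; [apply Rmin_r|].
      eapply Rle_trans; [apply Rmin_l|apply H2; lia].
Qed.

Lemma phat_sum (p : nat -> R) n : sum_f_R0 (fun k => p (S k)) n = phat p (S (S n)).
Proof.
  induction n as [|n IH].
  - simpl. ring.
  - simpl sum_f_R0. rewrite IH. rewrite (phat_S p (S (S n))) by lia. reflexivity.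
Qed.

Lemma phat_div (f : nat -> R) c k : phat (fun i => f i / c) k = phat f k / c.
Proof.
  induction k as [|k IH]; [simpl; unfold Rdiv; ring|].
  destruct k as [|k]; [simpl; unfold Rdiv; ring|].
  rewrite !(phat_S _ (S k)) by lia. rewrite IH. unfold Rdiv. ring.
Qed.

Section Main.
Variable p : nat -> R.
Hypothesis hp : supported_by_N p.

Lemma hp1 : forall i, (1 <= i)%nat -> 0 < p i < 1.
Proof. apply hp. Qed.

Lemma phat_cv : Un_cv (fun n => phat p (S (S n))) 1.
Proof.
  destruct hp as [_ H]. eapply Un_cv_ext; [|exact H]. intros n. simpl. apply phat_sum.
Qed.

Lemma phat_lt1 M : phat p (S M) < 1.
Proof.
  destruct M as [|n]; [simpl; lra|].
  destruct hp as [_ H].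
  pose proof (growing_ineq (fun n => sum_f_R0 (fun k => p (S k)) n) 1) as G.
  assert (Hg : Un_growing (fun n => sum_f_R0 (fun k => p (S k)) n)).
  { intros m. simpl. pose proof (hp1 (S (S m)) ltac:(lia)). lra. }
  specialize (G Hg H (S n)). rewrite phat_sum in G. simpl sum_f_R0 in G.
  pose proof (phat_S p (S (S n)) ltac:(lia)). pose proof (hp1 (S (S n)) ltac:(lia)). simpl in *. lra.
Qed.

End Main.

Lemma E_range p (hp : supported_by_N p) y : pi_image_bounded p y -> 0 <= y < 1.
Proof.
  intros [w [[HN [M0 HM]] Hpi]].
  assert (Hc : code M0 w) by (intros j; split; [apply HN|apply HM]).
  pose proof (phat_lt1 p hp M0).
  assert (hr : forall i, (1 <= i <= M0)%nat -> 0 < p i < 1) by (intros i Hi; apply (hp1 p hp); lia).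
  pose proof (piv_cv p M0 hr ltac:(lra) w Hc) as Hcv.
  rewrite (UL_sequence _ _ _ Hpi Hcv).
  pose proof (piv_bounds p M0 hr ltac:(lra) w Hc). lra.
Qed.

Lemma find_i r (hr : 0 < r < 1) n : forall y, r ^ (S n) <= y <= 1 -> exists i, r ^ (S i) <= y <= r ^ i.
Proof.
  induction n as [|n IH]; intros y Hy.
  - exists O. simpl in *. lra.
  - destruct (Rle_lt_dec y (r ^ (S n))) as [H|H].
    + exists (S n). lra.
    + apply IH. lra.
Qed.

Lemma null_gt1 p (hp : supported_by_N p) s : 1 < s -> hausdorff_null s (pi_image_bounded p).
Proof.
  intros Hs delta eps Hd He.
  set (c := Rmin (Rmin delta (1/2)) (Rpower (eps/2) (/(s-1)))).
  assert (Hc0 : 0 < c) by (unfold c; repeat apply Rmin_glb_lt; try lra; apply Rpower_pos).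
  assert (Hc1 : c <= delta) by (unfold c; eapply Rle_trans; [apply Rmin_l|apply Rmin_l]).
  assert (Hc2 : c <= 1/2) by (unfold c; eapply Rle_trans; [apply Rmin_l|apply Rmin_r]).
  assert (Hc3 : c <= Rpower (eps/2) (/(s-1))) by (unfold c; apply Rmin_r).
  set (r := 1 - c).
  assert (Hr : 0 < r < 1) by (unfold r; lra).
  set (rs := Rpower r s).
  assert (Hrs : 0 < rs <= r).
  { split; [apply Rpower_pos|]. unfold rs. rewrite <- (Rpower_1 r) at 2 by lra.
    apply Rpower_anti; lra. }
  exists (fun i x => 1 - r ^ i <= x <= 1 - r ^ (S i)).
  exists (fun i => c * r ^ i).
  exists (Rpower c s * / (1 - rs)).
  split; [|split; [|split; [|split]]].
  - intros x Hx. apply (E_range p hp) in Hx.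
    destruct (pow_lt_1_zero r ltac:(rewrite Rabs_right; lra) (1 - x) ltac:(lra)) as [N HN].
    specialize (HN (S N) ltac:(lia)). rewrite Rabs_right in HN by (apply Rle_ge, pow_le; lra).
    destruct (find_i r Hr N (1 - x) ltac:(lra)) as [i Hi]. exists i. lra.
  - intros i. pose proof (pow_lt r i ltac:(lra)). pose proof (pow_incr r 1 i ltac:(lra)) as H1. rewrite pow1 in H1.
    split; [apply Rmult_lt_0_compat; lra|]. nra.
  - intros i x y Hx Hy. simpl in Hx, Hy. apply Rabs_le. unfold r in *. simpl in *. nra.
  - assert (E : forall i, Rpower (c * r ^ i) s = Rpower c s * (1 * rs ^ i)).
    { intros i. rewrite <- Rpower_mult_distr by (try apply pow_lt; lra).
      rewrite <- (Rpower_pow i r) by lra. rewrite Rpower_mult.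
      rewrite (Rmult_comm (INR i) s), <- Rpower_mult. rewrite (Rpower_pow i (Rpower r s)) by apply Rpower_pos. unfold rs. ring. }
    change (Un_cv (fun n => sum_f_R0 (fun i => Rpower (c * r ^ i) s) n) (Rpower c s * / (1 - rs))).
    apply (Un_cv_ext (fun n => sum_f_R0 (fun i => Rpower c s * (1 * rs ^ i)) n)).
    2:{ apply (isum_scal _ _ (Rpower c s)). apply (GP_infinite rs). rewrite Rabs_right; lra. }
    intros n. apply sum_eq. intros i _. rewrite E. reflexivity.
  - assert (H1 : c <= 1 - rs) by (unfold r in Hrs; lra).
    assert (H2 : Rpower c s = Rpower c (s - 1) * c).
    { rewrite <- (Rpower_1 c) at 3 by lra. rewrite <- Rpower_plus. f_equal; ring. }
    assert (H3 : Rpower c (s - 1) <= eps / 2).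
    { eapply Rle_trans. apply Rle_Rpower_l; [lra|split; [exact Hc0|exact Hc3]].
      rewrite Rpower_mult. replace (/(s-1) * (s-1)) with 1 by (field; lra).
      rewrite Rpower_1 by lra. lra. }
    pose proof (Rpower_pos c (s-1)).
    apply (Rle_lt_trans _ (Rpower c (s-1))); [|lra].
    rewrite H2. apply (Rmult_le_reg_r (1 - rs)); [lra|].
    rewrite Rmult_assoc, Rinv_l by lra. nra.
Qed.

Lemma lower p (hp : supported_by_N p) s : 0 <= s < 1 -> ~ hausdorff_null s (pi_image_bounded p).
Proof.
  intros Hs Hnull.
  pose proof (hp1 p hp) as Hp.
  set (pw := fun i => Rpower (p i) s).
  assert (Hpw : forall i, (1 <= i)%nat -> 0 < pw i) by (intros; apply Rpower_pos).
  assert (Hpwp : forall i, (1 <= i)%nat -> p i <= pw i).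
  { intros i Hi. unfold pw. rewrite <- (Rpower_1 (p i)) at 1 by (apply Hp; auto).
    apply Rpower_anti; [split; [apply Hp; auto|left; apply Hp; auto]|lra]. }
  assert (Hd1 : p 1%nat < pw 1%nat).
  { unfold pw. rewrite <- (Rpower_1 (p 1%nat)) at 1 by (apply Hp; auto).
    apply Rpower_anti_strict; [apply Hp; auto|lra]. }
  set (dl := pw 1%nat - p 1%nat).
  assert (Hgr : forall n, phat p (S (S n)) + dl <= phat pw (S (S n))).
  { induction n as [|n IH].
    - simpl. unfold dl. lra.
    - rewrite (phat_S p (S (S n))), (phat_S pw (S (S n))) by lia.
      pose proof (Hpwp (S (S n)) ltac:(lia)). lra. }
  destruct (phat_cv p hp dl ltac:(unfold dl; lra)) as [N HN].
  set (n := Nat.max N 1).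
  specialize (HN n ltac:(unfold n; lia)). unfold Rdist in HN. apply Rabs_def2 in HN.
  set (M := S n).
  set (Sm := phat pw (S M)).
  assert (HSm : 1 < Sm) by (unfold Sm, M; pose proof (Hgr n); lra).
  set (q := fun i => pw i / Sm).
  assert (HPq : phat q (S M) = 1).
  { unfold q. rewrite phat_div. fold Sm. field. lra. }
  assert (Hq : forall i, (1 <= i <= M)%nat -> 0 < q i < 1).
  { intros i Hi. pose proof (Hpw i ltac:(lia)). split.
    - unfold q. apply Rdiv_lt_0_compat; lra.
    - unfold q. apply (Rmult_lt_reg_r Sm); [lra|]. unfold Rdiv. rewrite Rmult_assoc, Rinv_l by lra.
      try rewrite Rmult_1_r.
      destruct (Nat.eq_dec i 1) as [->|Hne].
      + pose proof (phat_mono_pos pw 3 (S M) Hpw ltac:(unfold M, n; lia)).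
        pose proof (Hpw 2%nat ltac:(lia)). fold Sm in H0. change (phat pw 3) with (0 + pw 1%nat + pw 2%nat) in H0. lra.
      + pose proof (phat_mono_pos pw (S i) (S M) Hpw ltac:(lia)). fold Sm in H0.
        rewrite phat_S in H0 by lia.
        pose proof (phat_mono_pos pw 2 i Hpw ltac:(lia)). pose proof (Hpw 1%nat ltac:(lia)).
        simpl in H1. lra. }
  assert (Hqp : forall i, (1 <= i <= M)%nat -> q i <= Rpower (p i) s).
  { intros i Hi. pose proof (Hpw i ltac:(lia)). fold (pw i). unfold q.
    apply (Rmult_le_reg_r Sm); [lra|]. unfold Rdiv. rewrite Rmult_assoc, Rinv_l by lra. nra. }
  assert (HpM : forall i, (1 <= i <= M)%nat -> 0 < p i < 1) by (intros i Hi; apply Hp; lia).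
  pose proof (phat_lt1 p hp M) as HPp.
  destruct (finite_max q M (fun i Hi => proj2 (Hq i Hi))) as [rho [Hrho1 Hrho2]].
  destruct (finite_min p M (fun i Hi => proj1 (HpM i Hi))) as [pmin [Hpm1 Hpm2]].
  set (K := Kc p M s pmin).
  assert (HK : 0 < K) by (unfold K, Kc; apply Rpower_pos).
  destruct (Hnull 1 (/ (4 * K)) ltac:(lra) ltac:(apply Rinv_0_lt_compat; lra))
    as [U [d [l [Hcov [Hd [Hdiam [Hsum Hl]]]]]]].
  set (W := fun i t => exists y, code M y /\ piv q y = t /\ U i (piv p y)).
  assert (Hob : 1/2 <= 2 * (K * l)).
  { apply (outer_bound W (fun i => K * Rpower (d i) s)).
    - intros i. pose proof (Rpower_pos (d i) s). nra.
    - intros i x y [y1 [Hy1 [<- Hu1]]] [y2 [Hy2 [<- Hu2]]].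
      destruct (holder p q M HpM Hq HPp ltac:(lra) s ltac:(lra) Hqp pmin Hpm1 Hpm2 y1 y2 Hy1 Hy2)
        as [[H1 H2]|H].
      + eapply Rle_trans; [exact H2|]. fold K. apply Rmult_le_compat_l; [lra|].
        apply Rle_Rpower_l; [lra|]. split; [exact H1|]. apply (Hdiam i); auto.
      + subst. rewrite Rminus_diag, Rabs_R0. pose proof (Rpower_pos (d i) s). nra.
    - apply isum_scal. exact Hsum.
    - intros t Ht. 
      assert (Ht' : 0 <= t < 1) by lra.
      pose proof (ycode_code q M Hq HPq t Ht') as Hc.
      pose proof (ycode_piv q M Hq HPq rho Hrho1 Hrho2 t Ht') as Hpv.
      destruct (Hcov (piv p (ycode q M t))) as [i Hi].
      + exists (ycode q M t). split.
        * split; [intros j; apply Hc|exists M; intros j; apply Hc].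
        * apply (piv_cv p M HpM ltac:(lra)). exact Hc.
      + exists i. exists (ycode q M t). auto. }
  assert (l >= / (4 * K)).
  { apply Rle_ge. apply (Rmult_le_reg_l (4 * K)); [lra|]. rewrite Rinv_r by lra. lra. }
  lra.
Qed.

Theorem corollary1 (p : nat -> R) (hp : supported_by_N p) :
  hausdorff_dim_is (pi_image_bounded p) 1.
Proof.
  split.
  - intros s [Hs Hn]. destruct (Rlt_le_dec s 1) as [H|H]; [|exact H].
    exfalso. exact (lower p hp s ltac:(lra) Hn).
  - intros b Hb. destruct (Rle_lt_dec b 1) as [H|H]; [exact H|].
    exfalso. assert (b <= (b + 1) / 2); [|lra].
    apply Hb. split; [lra|]. apply null_gt1; auto. lra.
Qed.
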